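(* Let $X=\{x_j:j\in J\}\subset\mathbb{R}^2$ be finite with $n=|J|$ and quadratic min-power centre $s^*$. There exist multipliers $\lambda_j\geq0$, $j\in J$, at most $3$ of which are nonzero, such that $s^*=\sum_{j\in J}\lambda_jM_j$, $\sum_{j\in J}\lambda_j=1$, and $\lambda_j\big(\|s^*-x_j\|-\max_{i\in J}\|s^*-x_i\|\big)=0$ for all $j\in J$.
   Context: $s^*$ is the unique minimiser of $P(s)=\sum_{i\in J}\|s-x_i\|^2+\max_{i\in J}\|s-x_i\|^2$; $M_j=\frac{1}{n+1}\big(x_j+\sum_{i\in J}x_i\big)$. *)

(* Defs.v *)
From HB Require Import structures.
From mathcomp Require Import all_boot all_order all_algebra.
From mathcomp Require Import reals.
Set Implicit Arguments. Unset Strict Implicit. Unset Printing Implicit Defensive.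
Import Order.TTheory GRing.Theory Num.Theory.
Local Open Scope ring_scope.

Section Defs.
Variable R : realType.

Definition sqdist (s y : 'rV[R]_2) : R := \sum_(k < 2) (s 0 k - y 0 k) ^+ 2.

Definition edist (s y : 'rV[R]_2) : R := Num.sqrt (sqdist s y).

Variable J : finType.

(* max over J of nonnegative quantities (the seed 0 is harmless: all terms are >= 0
   and J is assumed nonempty) *)
Definition maxJ (f : J -> R) : R := \big[Num.max/0]_(i : J) f i.

Definition Ppow (x : J -> 'rV[R]_2) (s : 'rV[R]_2) : R :=
  \sum_(i : J) sqdist s (x i) + maxJ (fun i => sqdist s (x i)).

Definition Mpt (x : J -> 'rV[R]_2) (j : J) : 'rV[R]_2 :=
  (#|J|.+1%:R)^-1 *: (x j + \sum_(i : J) x i).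
End Defs.

(* Main.v *)
Require Import Defs.
From HB Require Import structures.
From mathcomp Require Import all_boot all_order all_algebra.
From mathcomp Require Import reals.
From mathcomp Require boolp classical_sets topology normedtype derive.
From mathcomp Require Import ring lra.
Import Order.TTheory GRing.Theory Num.Theory.
Set Implicit Arguments. Unset Strict Implicit. Unset Printing Implicit Defensive.
Local Open Scope ring_scope.

Lemma dep4 (R : realType) (a b c : 'I_4 -> R) :
  exists al : 'rV[R]_4, al != 0 /\ \sum_i al 0 i * a i = 0 /\
     \sum_i al 0 i * b i = 0 /\ \sum_i al 0 i * c i = 0.
Proof.
pose W : 'M[R]_(4,3) := \matrix_(i, k) (if k == 0 then a i else if k == 1 then b i else c i).
pose K := kermx W.
have Kn0 : K != 0.
  rewrite -mxrank_eq0 /K mxrank_ker.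
  have := rank_leq_col W; case: (\rank W) => [|[|[|[|r]]]] //.
have [i Hi] : exists i, row i K != 0.
  apply/existsP; move: Kn0; apply: contraR; rewrite negb_exists => /forallP H.
  apply/eqP/row_matrixP => i; rewrite row0; exact/eqP/negPn/H.
exists (row i K); split => //.
have H0 : row i K *m W = 0 by rewrite -row_mul mulmx_ker row0.
have Hk : forall k : 'I_3, \sum_j row i K 0 j * W j k = 0.
  move=> k; have := congr1 (fun M : 'M_(1,3) => M 0 k) H0; rewrite /= [in X in X -> _]mxE [in X in X -> _]mxE.
  by move=> E; apply: etrans E.
split; [have := Hk 0 | split; [have := Hk 1 | have := Hk 2]];
  move=> E; rewrite -[RHS]E; apply: eq_bigr => j _; rewrite [W _ _]mxE //.
Qed.

Lemma carath_step (R : realType) (J : finType) (a b mu : J -> R) :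
  (forall j, 0 <= mu j) -> (3 < #|[set j | mu j != 0%R]|)%N ->
  \sum_j mu j * a j = 0 -> \sum_j mu j * b j = 0 ->
  exists mu2 : J -> R, [/\ forall j, 0 <= mu2 j, forall j, mu2 j != 0 -> mu j != 0,
   (#|[set j | mu2 j != 0%R]| < #|[set j | mu j != 0%R]|)%N,
   \sum_j mu2 j = \sum_j mu j & \sum_j mu2 j * a j = 0 /\ \sum_j mu2 j * b j = 0].
Proof.
move=> H0 Hc Ha Hb.
set S := [set j | mu j != 0%R] in Hc *.
have [j0 _] : exists j0, j0 \in S.
  by apply/set0Pn; rewrite -card_gt0; apply: leq_trans Hc.
pose e := enum S.
have se : size e = #|S| by rewrite cardE.
pose f (i : 'I_4) := nth j0 e i.
have fS : forall i, f i \in S.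
  move=> i; rewrite -mem_enum; apply: mem_nth; rewrite se.
  by apply: leq_trans (ltn_ord i) Hc.
have finj : injective f.
  move=> i i' E; apply/val_inj/eqP; rewrite -(@nth_uniq _ j0 e i i').
  - by rewrite /f in E; rewrite E.
  - by rewrite se; apply: leq_trans (ltn_ord i) Hc.
  - by rewrite se; apply: leq_trans (ltn_ord i') Hc.
  - exact: enum_uniq.
have [al [aln0 [ala [alb alS]]]] := @dep4 R (fun i => a (f i)) (fun i => b (f i)) (fun=> 1).
pose A j := \sum_(i < 4) (if f i == j then al 0 i else 0).
have sumA : forall F : J -> R, \sum_j A j * F j = \sum_i al 0 i * F (f i).
  move=> F; rewrite /A.
  under eq_bigr do rewrite mulr_suml.
  rewrite exchange_big; apply: eq_bigr => i _.
  rewrite (bigD1 (f i)) //= eqxx big1 ?addr0 // => j /negbTE ne.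
  by rewrite eq_sym ne mul0r.
have Af : forall i, A (f i) = al 0 i.
  move=> i; rewrite /A (bigD1 i) //= eqxx big1 ?addr0 // => i' /negbTE ne.
  by rewrite (inj_eq finj) ne.
have AS : forall j, A j != 0 -> j \in S.
  move=> j; apply: contraR => jS; apply/eqP; rewrite /A big1 // => i _.
  case: eqP => // E; by move: jS; rewrite -E fS.
have sA1 : \sum_j A j = 0.
  by rewrite -[RHS]alS -(sumA (fun=> 1)); apply: eq_bigr => j _; rewrite mulr1.
have [j1 Hj1] : exists j1, 0 < A j1.
  apply/existsP; apply: contraT; rewrite negb_exists => /forallP Hn.
  have Hle : forall j, 0 <= - A j by move=> j; rewrite oppr_ge0 leNgt; exact: Hn.
  have Hz : \sum_j - A j = 0 by rewrite sumrN sA1 oppr0.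
  move: aln0; apply: contraNT => _; apply/eqP/rowP => i; rewrite mxE -Af.
  by apply/eqP; rewrite -oppr_eq0; apply/eqP; exact: (psumr_eq0P (fun j _ => Hle j) Hz).
case: (@arg_minP _ _ _ j1 (fun j => 0 < A j) (fun j => mu j / A j) Hj1) => jm Hjm Hmin.
pose t := mu jm / A jm.
have t0 : 0 <= t by rewrite /t divr_ge0 // ltW.
pose mu2 j := mu j - t * A j.
exists mu2; split.
- move=> j; rewrite /mu2 subr_ge0.
  case: (ltrP 0 (A j)) => Aj.
    by have := Hmin j Aj; rewrite ler_pdivlMr.
  by apply: le_trans (H0 j); rewrite mulr_ge0_le0.
- move=> j; apply: contraNN => /eqP mj; apply/eqP.
  have : A j = 0 by apply/eqP; apply: contraT => /AS; rewrite inE mj eqxx.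
  by rewrite /mu2 mj => ->; rewrite mulr0 subr0.
- apply: proper_card; apply/properP; split.
    apply/subsetP => j; rewrite !inE; apply: contraNN => /eqP mj; apply/eqP.
    have : A j = 0 by apply/eqP; apply: contraT => /AS; rewrite inE mj eqxx.
    by rewrite /mu2 mj => ->; rewrite mulr0 subr0.
  exists jm; first by apply: AS; rewrite gt_eqF.
  by rewrite inE negbK /mu2 /t divfK ?subrr // gt_eqF.
- by rewrite /mu2 sumrB -mulr_sumr sA1 mulr0 subr0.
- split.
    rewrite /mu2; under eq_bigr do rewrite mulrBl -mulrA.
    by rewrite sumrB -mulr_sumr sumA ala Ha mulr0 subr0.
  rewrite /mu2; under eq_bigr do rewrite mulrBl -mulrA.
  by rewrite sumrB -mulr_sumr sumA alb Hb mulr0 subr0.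
Qed.

Lemma carath (R : realType) (J : finType) (a b mu : J -> R) :
  (forall j, 0 <= mu j) -> \sum_j mu j = 1 ->
  \sum_j mu j * a j = 0 -> \sum_j mu j * b j = 0 ->
  exists lam : J -> R, [/\ forall j, 0 <= lam j, forall j, lam j != 0 -> mu j != 0,
   (#|[set j | lam j != 0%R]| <= 3)%N,
   \sum_j lam j = 1 & \sum_j lam j * a j = 0 /\ \sum_j lam j * b j = 0].
Proof.
move=> H0 H1 Ha Hb.
suff: forall k (nu : J -> R), (#|[set j | nu j != 0%R]| <= k)%N ->
  (forall j, 0 <= nu j) -> \sum_j nu j = 1 ->
  \sum_j nu j * a j = 0 -> \sum_j nu j * b j = 0 ->
  (forall j, nu j != 0 -> mu j != 0) ->
  exists lam : J -> R, [/\ forall j, 0 <= lam j, forall j, lam j != 0 -> mu j != 0,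
   (#|[set j | lam j != 0%R]| <= 3)%N,
   \sum_j lam j = 1 & \sum_j lam j * a j = 0 /\ \sum_j lam j * b j = 0].
  by move/(_ _ mu (leqnn _)); apply.
elim => [|k IH] nu Hk N0 N1 Na Nb Nmu.
  by exists nu; split => //; apply: leq_trans Hk _.
case: (leqP #|[set j | nu j != 0%R]| 3) => H3.
  by exists nu; split.
have [nu2 [P0 Psupp Pc P1 [Pa Pb]]] := @carath_step R J a b nu N0 H3 Na Nb.
apply: (IH nu2) => //.
- by have := leq_trans Pc Hk; rewrite ltnS.
- by rewrite P1.
- by move=> j /Psupp /Nmu.
Qed.

Lemma sqdist_ge0 (R : realType) (s y : 'rV[R]_2) : 0 <= sqdist s y.
Proof. by apply: sumr_ge0 => k _; rewrite sqr_ge0. Qed.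

Lemma sqdist_shift (R : realType) (s d y : 'rV[R]_2) (e : R) :
  sqdist (s + e *: d) y = sqdist s y + 2 * e * (\sum_k d 0 k * (s 0 k - y 0 k))
     + e ^+ 2 * \sum_k d 0 k ^+ 2.
Proof.
rewrite /sqdist !mulr_sumr -!big_split /=; apply: eq_bigr => k _.
rewrite !mxE; ring.
Qed.

Definition vk (R : realType) (J : finType) (x : J -> 'rV[R]_2) (s : 'rV[R]_2) j k :=
  #|J|.+1%:R * s 0 k - x j 0 k - \sum_i x i 0 k.

Definition gj (R : realType) (J : finType) (x : J -> 'rV[R]_2) (t : 'rV[R]_2) j :=
  \sum_i sqdist t (x i) + sqdist t (x j).

Lemma g_shift (R : realType) (J : finType) (x : J -> 'rV[R]_2) (s d : 'rV[R]_2) (e : R) j :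
  gj x (s + e *: d) j = gj x s j + 2 * e * (\sum_k d 0 k * vk x s j k)
     + e ^+ 2 * (#|J|.+1%:R * \sum_k d 0 k ^+ 2).
Proof.
rewrite /gj; under eq_bigr do rewrite sqdist_shift.
rewrite sqdist_shift !big_split /= -!mulr_sumr sumr_const.
have E : \sum_i \sum_k d 0 k * (s 0 k - x i 0 k) =
    \sum_k d 0 k * (#|J|%:R * s 0 k - \sum_i x i 0 k).
  rewrite exchange_big; apply: eq_bigr => k _.
  by rewrite -mulr_sumr sumrB sumr_const mulr_natl.
have E2 : \sum_k d 0 k * vk x s j k = \sum_k d 0 k * (s 0 k - x j 0 k) +
    \sum_k d 0 k * (#|J|%:R * s 0 k - \sum_i x i 0 k).
  rewrite -big_split; apply: eq_bigr => k _ /=; rewrite /vk [_.+1%:R]mulrSr; ring.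
rewrite E E2 -mulr_natl [_.+1%:R]mulrSr; ring.
Qed.

Lemma var_ineq2 (R : realType) (p0 p1 v0 v1 : R) :
  (forall e, 0 < e -> e <= 1 -> p0 ^+ 2 + p1 ^+ 2 <=
      ((1 - e) * p0 + e * v0) ^+ 2 + ((1 - e) * p1 + e * v1) ^+ 2) ->
  0 <= p0 * (v0 - p0) + p1 * (v1 - p1).
Proof.
move=> H; set D := p0 * (v0 - p0) + p1 * (v1 - p1).
rewrite leNgt; apply/negP => D0.
set E := (v0 - p0) ^+ 2 + (v1 - p1) ^+ 2.
have E0 : 0 <= E by rewrite addr_ge0 // sqr_ge0.
have q0 : 0 < E - D by lra.
set e := - D / (E - D).
have e0 : 0 < e by rewrite divr_gt0 // oppr_gt0.
have e1 : e <= 1 by rewrite ler_pdivrMr // mul1r; lra.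
have eq : e * (E - D) = - D by rewrite /e divfK // gt_eqF.
have eE : e * E <= - D by nra.
have := H e e0 e1.
have -> : ((1 - e) * p0 + e * v0) ^+ 2 + ((1 - e) * p1 + e * v1) ^+ 2 =
   p0 ^+ 2 + p1 ^+ 2 + 2 * e * D + e * (e * E) by rewrite /D /E; ring.
have : e * (e * E) <= e * (- D) by rewrite ler_pM2l.
nra.
Qed.

Lemma var_ineq (R : realType) (p v : 'I_2 -> R) :
  (forall e, 0 < e -> e <= 1 -> \sum_k p k ^+ 2 <= \sum_k ((1 - e) * p k + e * v k) ^+ 2) ->
  0 <= \sum_k p k * (v k - p k).
Proof.
move=> H; rewrite !big_ord_recr !big_ord0 /= !add0r.
apply: var_ineq2 => e e0 e1; move: (H e e0 e1).
by rewrite !big_ord_recr !big_ord0 /= !add0r.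
Qed.

Lemma maxJ_ge (R : realType) (J : finType) (f : J -> R) j : f j <= maxJ f.
Proof. exact: le_bigmax. Qed.

Lemma maxJ_lt (R : realType) (J : finType) (f : J -> R) c :
  0 < c -> (forall j, f j < c) -> maxJ f < c.
Proof. by move=> c0 H; apply: bigmax_lt. Qed.

Lemma maxJ_att (R : realType) (J : finType) (f : J -> R) :
  (0 < #|J|)%N -> (forall j, 0 <= f j) -> exists j, maxJ f = f j.
Proof.
case/card_gt0P => j0 _ H.
have [i _ E] := @eq_bigmax _ _ J (0 : R) j0 predT f isT (fun i _ => H i).
by exists i; rewrite /maxJ -E.
Qed.

Lemma maxJ_sqrt (R : realType) (J : finType) (f : J -> R) :
  (0 < #|J|)%N -> (forall j, 0 <= f j) ->
  maxJ (fun i => Num.sqrt (f i)) = Num.sqrt (maxJ f).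
Proof.
move=> J0 H; have [j Hj] := maxJ_att J0 H.
rewrite Hj; apply/eqP; rewrite eq_le; apply/andP; split.
  apply: bigmax_le; first exact: sqrtr_ge0.
  by move=> i _; apply: ler_wsqrtr; rewrite -Hj maxJ_ge.
exact: (maxJ_ge (fun i => Num.sqrt (f i))).
Qed.


Module AN.
Import boolp classical_sets topology normedtype derive.
Import numFieldNormedType.Exports.
Local Open Scope classical_set_scope.

Lemma cont_sum (T : topologicalType) (R : realType) (I : Type) (r : seq I)
   (F : I -> T -> R) :
  (forall i, continuous (F i)) -> continuous (fun x => \sum_(i <- r) F i x).
Proof.
move=> H; elim: r => [|a r IH].
  have -> : (fun x => \sum_(i <- [::]) F i x) = fun=> 0.
    by apply/funext => x; rewrite big_nil.
  exact: cst_continuous.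
have -> : (fun x => \sum_(i <- a :: r) F i x) = (fun x => F a x + \sum_(i <- r) F i x).
  by apply/funext => x; rewrite big_cons.
by move=> x; apply: continuousD; [exact: H | exact: IH].
Qed.

Lemma cont_mul (T : topologicalType) (R : realType) (f g : T -> R) :
  continuous f -> continuous g -> continuous (fun x => f x * g x).
Proof. by move=> cf cg x; apply: continuousM; [exact: cf | exact: cg]. Qed.

Lemma cont_add (T : topologicalType) (R : realType) (f g : T -> R) :
  continuous f -> continuous g -> continuous (fun x => f x + g x).
Proof. by move=> cf cg x; apply: continuousD; [exact: cf | exact: cg]. Qed.

Lemma cont_sub (T : topologicalType) (R : realType) (f g : T -> R) :
  continuous f -> continuous g -> continuous (fun x => f x - g x).
Proof. by move=> cf cg x; apply: continuousB; [exact: cf | exact: cg]. Qed.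

Lemma minnorm (R : realType) (J : finType) (act : pred J) (v : J -> 'I_2 -> R) :
  (exists j, act j) ->
  exists mu : J -> R, [/\ forall j, 0 <= mu j, \sum_j mu j = 1,
    forall j, ~~ act j -> mu j = 0 &
    forall nu : J -> R, (forall j, 0 <= nu j) -> \sum_j nu j = 1 ->
      (forall j, ~~ act j -> nu j = 0) ->
      \sum_k (\sum_j mu j * v j k) ^+ 2 <= \sum_k (\sum_j nu j * v j k) ^+ 2].
Proof.
move=> [ja Hja].
pose rk := @enum_rank J.
pose h (r : 'rV[R]_#|J|) := (\sum_j r 0 (rk j) - 1) ^+ 2 +
   \sum_j (if act j then 0 else r 0 (rk j) ^+ 2).
pose F (r : 'rV[R]_#|J|) := \sum_k (\sum_j r 0 (rk j) * v j k) ^+ 2.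
pose B := [set r : 'rV[R]_#|J| | forall i, `[(0:R), 1] (r ord0 i)].
pose A := B `&` (h @^-1` [set y | y = 0]).
have cB : compact B.
  by apply: (@rV_compact _ _ (fun=> `[(0:R), 1])) => _; exact: segment_compact.
have ccoord : forall j, continuous (fun r : 'rV[R]_#|J| => r 0 (rk j)).
  by move=> j; exact: coord_continuous.
have ch : continuous h.
  rewrite /h; apply: cont_add.
    under eq_fun do rewrite expr2.
    have cc1 : continuous (fun r : 'rV[R]_#|J| => \sum_j r 0 (rk j) - 1).
      by apply: cont_sub; [apply: cont_sum => j; exact: ccoord | exact: cst_continuous].
    exact: (cont_mul cc1 cc1).
  apply: cont_sum => j; case: (act j) => /=; first exact: cst_continuous.
  under eq_fun do rewrite expr2; exact: (cont_mul (ccoord j) (ccoord j)).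
have cF : continuous F.
  apply: cont_sum => k; under eq_fun do rewrite expr2; apply: cont_mul;
  by apply: cont_sum => j; apply: cont_mul => //; exact: cst_continuous.
have cA : compact A.
  apply: (subclosed_compact _ cB); last exact: subIsetl.
  apply: closedI; first by apply: compact_closed => //; exact: norm_hausdorff.
  by move: ch => /continuous_closedP; apply; exact: closed_eq.
pose r0 : 'rV[R]_#|J| := \row_i (if i == rk ja then 1 else 0).
have A0 : A !=set0.
  exists r0; split.
    by move=> i; rewrite /r0 mxE; case: ifP => _; rewrite /= in_itv /= ?lexx ?ler01.
  rewrite /= /h /r0.
  have E : forall j, (\row_i (if i == rk ja then 1 else 0) : 'rV[R]_#|J|) 0 (rk j) = (j == ja)%:R.
    by move=> j; rewrite mxE (inj_eq enum_rank_inj); case: (j == ja).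
  under eq_bigr do rewrite E.
  under [X in _ + X = _]eq_bigr do rewrite E.
  rewrite (bigD1 ja) //= eqxx big1 ?addr0 ?subrr; last first.
    by move=> j /negbTE ->.
  rewrite expr0n /= add0r big1 // => j _.
  by case: ifP => // /negbT; case: eqP => [->|]; rewrite ?Hja // expr0n.
have [c cA' cmin] := EVT_min_rV A0 cA (continuous_subspaceT cF).
rewrite inE in cA'; case: cA' => cB' ch0.
have h0 : h c = 0 by exact: ch0.
have hge1 : 0 <= \sum_j (if act j then 0 else c 0 (rk j) ^+ 2).
  by apply: sumr_ge0 => j _; case: (act j); rewrite ?sqr_ge0.
move: h0; rewrite /h => /eqP; rewrite paddr_eq0 ?sqr_ge0 // => /andP[/eqP s1 /eqP s2].
have Hs : \sum_j c 0 (rk j) = 1.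
  by move/eqP: s1; rewrite sqrf_eq0 subr_eq0 => /eqP.
have Hz : forall j, ~~ act j -> c 0 (rk j) = 0.
  move=> j nj.
  have H : forall i, true -> 0 <= (if act i then 0 else c 0 (rk i) ^+ 2).
    by move=> i _; case: (act i); rewrite ?sqr_ge0.
  have := psumr_eq0P H s2 (i := j) isT.
  by rewrite (negbTE nj) => /eqP; rewrite sqrf_eq0 => /eqP.
exists (fun j => c 0 (rk j)); split.
- by move=> j; have := cB' (rk j); rewrite /= in_itv /= => /andP[].
- exact: Hs.
- exact: Hz.
- move=> nu nu0 nu1 nuz.
  pose r : 'rV[R]_#|J| := \row_i nu (enum_val i).
  have Er : forall j, r 0 (rk j) = nu j by move=> j; rewrite mxE /rk enum_rankK.
  have EF : F r = \sum_k (\sum_j nu j * v j k) ^+ 2.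
    by rewrite /F; apply: eq_bigr => k _; congr (_ ^+ 2); apply: eq_bigr => j _; rewrite Er.
  rewrite -EF; apply: cmin; rewrite inE; split.
    move=> i; rewrite /r mxE /= in_itv /= nu0 /=; rewrite -nu1.
    by rewrite (bigD1 (enum_val i)) //= lerDl sumr_ge0.
  rewrite /= /h; under eq_bigr do rewrite Er.
  under [X in _ + X = _]eq_bigr do rewrite Er.
  rewrite nu1 subrr expr0n /= add0r big1 // => j _.
  by case: ifP => // /negbT /nuz ->; rewrite expr0n.
Qed.

End AN.

Lemma sum_delta (R : realType) (J : finType) (j : J) (F : J -> R) :
  \sum_i (i == j)%:R * F i = F j.
Proof.
rewrite (bigD1 j) //= eqxx mul1r big1 ?addr0 // => i /negbTE ->; by rewrite mul0r.
Qed.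

Theorem lemma5 (R : realType) (J : finType) (x : J -> 'rV[R]_2) (s : 'rV[R]_2) :
  injective x -> (0 < #|J|)%N ->
  (forall t : 'rV[R]_2, Ppow x s <= Ppow x t) ->
  exists lam : J -> R,
    (forall j, (0 <= lam j)%R) /\
    (#|[set j | lam j != 0%R]| <= 3)%N /\
    s = \sum_(j : J) lam j *: Mpt x j /\
    \sum_(j : J) lam j = 1 /\
    (forall j, lam j * (edist s (x j) - maxJ (fun i => edist s (x i))) = 0).
Proof.
move=> xinj J0 Hmin.
pose act j := sqdist s (x j) == maxJ (fun i => sqdist s (x i)).
have [ja Hja] : exists ja, act ja.
  have [j Hj] := @maxJ_att _ _ (fun i => sqdist s (x i)) J0 (fun i => sqdist_ge0 _ _).
  by exists j; rewrite /act Hj.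
pose v j k := vk x s j k.
have [mu [mu0 mu1 muz mumin]] := @AN.minnorm _ _ act v (ex_intro _ ja Hja).
pose p k := \sum_j mu j * v j k.
have var : forall j, act j -> 0 <= \sum_k p k * (v j k - p k).
  move=> j aj; apply: var_ineq => e e0 e1.
  pose nu i := (1 - e) * mu i + e * (i == j)%:R.
  have Enu : forall k, \sum_i nu i * v i k = (1 - e) * p k + e * v j k.
    move=> k; rewrite /nu; under eq_bigr do rewrite mulrDl -!mulrA.
    by rewrite big_split /= -!mulr_sumr sum_delta.
  have EE : \sum_k (\sum_i nu i * v i k) ^+ 2 = \sum_k ((1 - e) * p k + e * v j k) ^+ 2.
    by apply: eq_bigr => k _; rewrite Enu.
  rewrite -EE; apply: mumin.
  - move=> i; rewrite /nu addr_ge0 // mulr_ge0 //; lra.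
  - rewrite /nu big_split /= -!mulr_sumr mu1.
    by rewrite (bigD1 j) //= eqxx big1 ?addr0 => [|i /negbTE ->] //; rewrite mulr1 mulr1 subrK.
  - move=> i ni; rewrite /nu (muz i ni) mulr0 add0r.
    by case: eqP ni => [->|_ _]; rewrite ?aj ?mulr0.
have pz : forall k, p k = 0.
  pose Q := \sum_k p k ^+ 2.
  have Q0 : 0 <= Q by apply: sumr_ge0 => k _; exact: sqr_ge0.
  suff QQ : Q = 0.
    move=> k; have H : forall k, true -> 0 <= p k ^+ 2 by move=> k' _; exact: sqr_ge0.
    by have := psumr_eq0P H QQ (i := k) isT; move/eqP; rewrite sqrf_eq0 => /eqP.
  apply/eqP; rewrite eq_le Q0 andbT leNgt; apply/negP => Qp.
  pose c : R := #|J|.+1%:R.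
  have c1 : 1 <= c by rewrite /c ler1n.
  pose d : 'rV[R]_2 := \row_k (- p k).
  pose L j := \sum_k d 0 k * v j k.
  have dQ : \sum_k d 0 k ^+ 2 = Q by apply: eq_bigr => k _; rewrite mxE sqrrN.
  have Lact : forall j, act j -> L j <= - Q.
    move=> j aj; have := var j aj.
    have -> : \sum_k p k * (v j k - p k) = \sum_k p k * v j k - Q.
      by rewrite -sumrB; apply: eq_bigr => k _; rewrite mulrBr expr2.
    have -> : L j = - \sum_k p k * v j k.
      by rewrite /L -sumrN; apply: eq_bigr => k _; rewrite mxE mulNr.
    lra.
  pose gap j := maxJ (fun i => sqdist s (x i)) - sqdist s (x j).
  have gap0 : forall j, 0 <= gap j.
    by move=> j; rewrite /gap subr_ge0; exact: (maxJ_ge (fun i => sqdist s (x i))).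
  have gapp : forall j, ~~ act j -> 0 < gap j.
    move=> j nj; rewrite /gap subr_gt0 lt_neqAle (maxJ_ge (fun i => sqdist s (x i))) andbT.
    exact: nj.
  have gapa : forall j, act j -> gap j = 0.
    by move=> j /eqP aj; rewrite /gap aj subrr.
  pose m := Ppow x s.
  have gm : forall j, gj x s j = m - gap j by move=> j; rewrite /gj /m /Ppow /gap; ring.
  pose B := \sum_j 2 * `|L j| + c * Q + 1.
  have LB : forall j, 2 * `|L j| + c * Q <= B - 1.
    move=> j; rewrite /B addrK lerD2r (bigD1 j) //= lerDl.
    by apply: sumr_ge0 => i _; rewrite mulr_ge0.
  have B0 : 0 < B.
    have := LB ja; have : 0 <= `|L ja| by []. have : 0 <= c * Q by rewrite mulr_ge0 //; lra.
    lra.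
  pose S := \sum_j (if act j then 0 else (gap j)^-1).
  have S0 : forall j, ~~ act j -> (gap j)^-1 <= S.
    move=> j nj; rewrite /S (bigD1 j) //= (negbTE nj) lerDl.
    apply: sumr_ge0 => i _; case: (act i) => //; rewrite invr_ge0 //.
  have S0' : 0 <= S.
    by apply: sumr_ge0 => i _; case: (act i) => //; rewrite invr_ge0.
  pose del := (S + 1)^-1.
  have delp : 0 < del by rewrite /del invr_gt0; lra.
  have delg : forall j, ~~ act j -> del <= gap j.
    move=> j nj; rewrite /del -[(S + 1)^-1]mul1r ler_pdivrMr; last by lra.
    have gp := gapp j nj.
    have : gap j * (gap j)^-1 = 1 by rewrite mulfV // gt_eqF.
    have := S0 j nj.
    have : 0 <= (gap j)^-1 by rewrite invr_ge0 ltW.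
    nra.
  pose e := del / (c * del + B).
  have cd0 : 0 < c * del by rewrite mulr_gt0 //; lra.
  have den0 : 0 < c * del + B by lra.
  have e0 : 0 < e by rewrite /e divr_gt0.
  have ec : e * c <= 1.
    rewrite /e mulrAC ler_pdivrMr // mul1r mulrC; lra.
  have eB : e * B <= del.
    rewrite /e mulrAC ler_pdivrMr //; have : 0 < del * c by rewrite mulr_gt0 //; lra.
    nra.
  have e1 : e <= 1 by nra.
  pose t := s + e *: d.
  have gL : forall j, gj x t j = m - gap j + 2 * e * L j + e ^+ 2 * (c * Q).
    by move=> j; rewrite /t g_shift gm dQ.
  have G : forall j, gj x t j < m.
    move=> j; rewrite gL; case: (boolP (act j)) => aj.
      rewrite gapa // subr0; have := Lact j aj.
      have : 0 < e * Q by rewrite mulr_gt0.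
      have -> : e ^+ 2 * (c * Q) = (e * Q) * (e * c) by ring.
      nra.
    have := LB j; have := delg j aj; have := gapp j aj.
    have : L j <= `|L j| by exact: ler_norm.
    have cQ : 0 <= c * Q by rewrite mulr_ge0 //; lra.
    have -> : e ^+ 2 * (c * Q) = (e * (c * Q)) * e by ring.
    have : 0 <= e * (c * Q) by rewrite mulr_ge0 // ltW.
    nra.
  have : Ppow x t < m.
    rewrite /Ppow -ltrBrDl; apply: maxJ_lt.
      have := G ja; rewrite /gj; have := sqdist_ge0 t (x ja); lra.
    by move=> j; have := G j; rewrite /gj; lra.
  have := Hmin t; rewrite -/m; lra.
have [lam [l0 lsupp lcard l1 [la lb]]] :=
  @carath R J (fun j => v j ord0) (fun j => v j ord_max) mu mu0 mu1 (pz ord0) (pz ord_max).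
have lk : forall k : 'I_2, \sum_j lam j * v j k = 0.
  move=> k; have : k = ord0 \/ k = ord_max.
    by case: k => [[|[|]]] //= H; [left|right]; apply/val_inj.
  by case=> ->.
exists lam; split; [done | split; [done | split; [| split; [done|]]]].
- apply/rowP => k; rewrite summxE.
  under eq_bigr do rewrite /Mpt !mxE summxE.
  have := lk k; rewrite /v /vk.
  set c : R := #|J|.+1%:R; set X := \sum_i x i 0 k.
  have cn0 : c != 0 by rewrite /c pnatr_eq0.
  have E1 : \sum_j lam j * (c * s 0 k - x j 0 k - X) =
      c * s 0 k - \sum_j lam j * x j 0 k - X.
    under eq_bigr do rewrite !mulrBr.
    by rewrite !sumrB -!mulr_suml l1 !mul1r.
  have E2 : \sum_j lam j * (c^-1 * (x j 0 k + X)) =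
      c^-1 * (\sum_j lam j * x j 0 k + X).
    under eq_bigr do rewrite mulrCA mulrDr.
    by rewrite -mulr_sumr big_split /= -mulr_suml l1 mul1r.
  rewrite E1 E2 => /eqP; rewrite subr_eq0 subr_eq addrC => /eqP <-.
  by rewrite mulKf.
- move=> j; case: (eqVneq (lam j) 0) => [->|lj]; first by rewrite mul0r.
  have aj : act j.
    by apply: contraT => nj; move: (lsupp j lj); rewrite muz // eqxx.
  have E := @maxJ_sqrt _ _ (fun i => sqdist s (x i)) J0 (fun i => sqdist_ge0 _ _).
  rewrite /edist in E *; rewrite E -(eqP aj) subrr mulr0 //.
Qed.
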